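(* Let $H=E+D$ and $K=E'+D'$ be closed additive subgroups of $\mathbb{R}^{n}$ (with decompositions as in the context) and let $f:H\to K$ be a homomorphism of closed additive groups. Then: (i) if $f$ is injective, $|\widetilde{\mathrm{dim}}(H)|\leq|\widetilde{\mathrm{dim}}(K)|$; (ii) if $f$ is surjective, $|\widetilde{\mathrm{dim}}(H)|\geq|\widetilde{\mathrm{dim}}(K)|$; (iii) if $f$ is invertible, $\widetilde{\mathrm{dim}}(H)=\widetilde{\mathrm{dim}}(K)$; (iv) $f(H)$ is a closed additive subgroup of $K$; (v) for every closed subgroup $L$ of $K$, $f^{-1}(L)$ is a closed additive subgroup of $H$.
   Context: Every closed additive subgroup $H$ of $\mathbb{R}^n$ can be written $H=E+D$ with $E$ a vector subspace and $D$ a discrete additive subgroup with $E\cap\mathrm{vect}(D)=\{0\}$ ($\mathrm{vect}$ = real span); such decompositions $H=E+D$, $K=E'+D'$ are fixed. A map $f:H\to K$ is a homomorphism of closed additive groups if $f=f_1\oplus f_2$ with $f_1:E\to E'$ linear and $f_2:D\to D'$ a group homomorphism, i.e. $f(\lambda x+ py)=\lambda f_1(x)+pf_2(y)$ for all $\lambda\in\mathbb{R}$, $p\in\mathbb{Z}$, $x\in E$, $y\in D$. It is an isomorphism of closed additive groups if it is invertible. For an additive subgroup $G$, $\widetilde{\mathrm{dim}}(G):=p+i(q-p)$ where $p=\max\{\dim V: V\text{ a vector subspace},\ V\subset G\}$, $q=\dim\mathrm{vect}(G)$; $|\cdot|$ is the complex modulus. *)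

(* Defs.v *)
From HB Require Import structures.
From mathcomp Require Import all_boot all_order all_algebra.
From mathcomp Require Import all_classical all_reals all_analysis.
From mathcomp Require Import complex.
Set Implicit Arguments. Unset Strict Implicit. Unset Printing Implicit Defensive.
Import Order.TTheory GRing.Theory Num.Theory.
Import numFieldNormedType.Exports.
Local Open Scope classical_set_scope.
Local Open Scope ring_scope.

Section Defs.
Variables (R : realType) (n : nat).
Notation vec := 'rV[R]_n.

Definition is_add_subgroup (G : set vec) : Prop :=
  G 0 /\ (forall x y, G x -> G y -> G (x - y)).

Definition is_closed_subgroup (G : set vec) : Prop :=
  is_add_subgroup G /\ closed G.

Definition is_subspace (V : set vec) : Prop :=
  V 0 /\ (forall (a : R) x y, V x -> V y -> V (a *: x + y)).

Definition is_discrete_subgroup (D : set vec) : Prop :=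
  is_add_subgroup D /\ (forall x, D x -> \forall y \near x, D y -> y = x).

Definition vect (G : set vec) : set vec :=
  [set v | exists s : seq vec, (forall x, x \in s -> G x) /\ v \in span s].

Definition dimS (V : set vec) : nat :=
  \max_(k < n.+1 | `[< exists s : seq vec,
        size s = k /\ (forall x, x \in s -> V x) /\ free s >]) k.

Definition pdim (G : set vec) : nat :=
  \max_(k < n.+1 | `[< exists V : set vec,
        is_subspace V /\ V `<=` G /\ dimS V = k >]) k.

Definition qdim (G : set vec) : nat := dimS (vect G).

Definition dimt (G : set vec) : R[i] :=
  ((pdim G)%:R +i* ((qdim G)%:R - (pdim G)%:R))%C.

Definition sumset (E D : set vec) : set vec :=
  [set z | exists x y, E x /\ D y /\ z = x + y].

Definition is_decomp (H E D : set vec) : Prop :=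
  is_subspace E /\ is_discrete_subgroup D /\
  E `&` vect D = [set 0] /\ H = sumset E D.

Definition is_cag_hom (E D E' D' : set vec) (f f1 f2 : vec -> vec) : Prop :=
  (forall x, E x -> E' (f1 x)) /\
  (forall (a : R) x y, E x -> E y -> f1 (a *: x + y) = a *: f1 x + f1 y) /\
  (forall y, D y -> D' (f2 y)) /\
  (forall x y, D x -> D y -> f2 (x + y) = f2 x + f2 y) /\
  (forall (l : R) (p : int) x y, E x -> D y ->
      f (l *: x + y *~ p) = l *: f1 x + f2 y *~ p).

End Defs.

(* Main.v *)
Require Import Defs.
From HB Require Import structures.
From mathcomp Require Import all_boot all_order all_algebra.
From mathcomp Require Import all_classical all_reals all_analysis.
From mathcomp Require Import complex.
From mathcomp Require Import ring lra.
Import Order.TTheory GRing.Theory Num.Theory.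
Import numFieldNormedType.Exports.
Local Open Scope classical_set_scope.
Local Open Scope ring_scope.
Section P1.
Context {R : realType} {n : nat}.
Local Notation vec := 'rV[R]_n.
Implicit Types (S T G E D V H : set vec) (s b : seq vec).

Lemma sub_in {S x y} {a : R} : is_subspace S -> S x -> S y -> S (a *: x + y).
Proof. by case=> _ h; apply: h. Qed.

Lemma sub0 {S} : is_subspace S -> S 0.
Proof. by case. Qed.

Lemma subD {S x y} : is_subspace S -> S x -> S y -> S (x + y).
Proof. by move=> hS hx hy; have := @sub_in S x y 1 hS hx hy; rewrite scale1r. Qed.

Lemma subZ {S x} {a : R} : is_subspace S -> S x -> S (a *: x).
Proof. by move=> hS hx; have := @sub_in S x 0 a hS hx (sub0 hS); rewrite addr0. Qed.

Lemma subB {S x y} : is_subspace S -> S x -> S y -> S (x - y).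
Proof.
by move=> hS hx hy; have := @sub_in S y x (-1) hS hy hx; rewrite scaleN1r addrC.
Qed.

Lemma grp0 {G} : is_add_subgroup G -> G 0.
Proof. by case. Qed.

Lemma grpB {G x y} : is_add_subgroup G -> G x -> G y -> G (x - y).
Proof. by case=> _ h; apply: h. Qed.

Lemma grpN {G x} : is_add_subgroup G -> G x -> G (- x).
Proof. by move=> hG hx; have := grpB hG (grp0 hG) hx; rewrite sub0r. Qed.

Lemma grpD {G x y} : is_add_subgroup G -> G x -> G y -> G (x + y).
Proof.
by move=> hG hx hy; have := grpB hG hx (grpN hG hy); rewrite opprK.
Qed.

Lemma grpMn {G x k} : is_add_subgroup G -> G x -> G (x *+ k).
Proof.
move=> hG hx; elim: k => [|k ih]; first by rewrite mulr0n; exact: grp0.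
by rewrite mulrS; apply: grpD.
Qed.

Lemma grpMz {G x} {m : int} : is_add_subgroup G -> G x -> G (x *~ m).
Proof.
move=> hG hx; case: m => k; first by rewrite -pmulrn; exact: grpMn.
by rewrite NegzE mulrNz; apply: grpN => //; rewrite -pmulrn; exact: grpMn.
Qed.

Lemma subspace_grp S : is_subspace S -> is_add_subgroup S.
Proof. by move=> hS; split; [exact: sub0|move=> x y; exact: subB]. Qed.

Lemma span_in {S b v} : is_subspace S -> (forall x, x \in b -> S x) ->
  v \in <<b>>%VS -> S v.
Proof.
move=> hS hb vb; rewrite (@coord_span _ _ _ (in_tuple b) v vb); apply: (big_ind S); first exact: sub0 hS.
  by move=> x y; apply: subD.
move=> i _; apply: subZ => //; apply: hb; exact: mem_nth.
Qed.

Lemma free_size_le s : free s -> (size s <= n)%N.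
Proof.
move=> fs; rewrite -(eqP fs).
have := dimvS (subvf (span s)); rewrite dimvf /dim /= mul1n //.
Qed.

Lemma dimS_ge {S s} : free s -> (forall x, x \in s -> S x) -> (size s <= dimS S)%N.
Proof.
move=> fs hs; have hn : (size s < n.+1)%N by rewrite ltnS free_size_le.
apply: (@leq_bigmax_cond _ _ (fun k : 'I_n.+1 => nat_of_ord k) (Ordinal hn)).
by apply/asboolP; exists s.
Qed.

Lemma dimS_le S m : (forall s, free s -> (forall x, x \in s -> S x) -> (size s <= m)%N) ->
  (dimS S <= m)%N.
Proof.
move=> h; apply/bigmax_leqP => k /asboolP [s [<- [hs fs]]]; exact: h.
Qed.

Lemma dimS_len S : (dimS S <= n)%N.
Proof. by apply: dimS_le => s fs _; apply: free_size_le. Qed.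

Lemma free_sub_span s b : free s -> {subset s <= <<b>>%VS} -> (size s <= \dim <<b>>)%N.
Proof. by move=> fs hs; rewrite -(eqP fs); apply: dimvS; apply/span_subvP. Qed.

Definition maxfree S b := [/\ (forall x, x \in b -> S x), free b &
   forall x, S x -> x \in <<b>>%VS].

Lemma maxfree_ex S : exists b, maxfree S b.
Proof.
have [[b [sb [bS fb]]]|hno] := pselect (exists b, size b = dimS S /\
    (forall x, x \in b -> S x) /\ free b).
  exists b; split => // x Sx; apply: contraT => xb.
  have : (size (x :: b) <= dimS S)%N.
    by apply: dimS_ge; [rewrite free_cons xb fb| move=> y; rewrite inE => /predU1P[->|/bS]].
  by rewrite /= sb ltnn.
exfalso; have h : (dimS S <= (dimS S).-1)%N.
  apply: dimS_le => s fs hs; rewrite -ltnS; have := dimS_ge fs hs.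
  rewrite leq_eqVlt => /orP[/eqP e|]; first by exfalso; apply: hno; exists s.
  by case: (dimS S).
case: (dimS S) h hno => [_|k]; last by rewrite ltnn.
by apply; exists [::]; split => //; split => //; rewrite /free /= span_nil dimv0.
Qed.

Lemma dimS_maxfree {S b} : maxfree S b -> dimS S = size b.
Proof.
case=> bS fb Sb; apply/eqP; rewrite eqn_leq dimS_ge // andbT.
apply: dimS_le => s fs hs; rewrite -(eqP fb); apply: free_sub_span => // x /hs; exact: Sb.
Qed.

Lemma dimS_mono S T : S `<=` T -> (dimS S <= dimS T)%N.
Proof. by move=> ST; apply: dimS_le => s fs hs; apply: dimS_ge => // x /hs /ST. Qed.

Lemma vect_in {G x} : G x -> vect G x.
Proof. by move=> gx; exists [:: x]; split; [move=> y; rewrite inE => /eqP ->|apply: memv_span; rewrite inE]. Qed.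

Lemma qdim_eq G : qdim G = dimS G.
Proof.
have [b hb] := maxfree_ex G; rewrite (dimS_maxfree hb) /qdim.
case: hb => bG fb Gb; apply: dimS_maxfree; split => //.
- by move=> x /bG; apply: vect_in.
- move=> x [s [sG xs]]; have : (span s <= span b)%VS by apply/span_subvP => y /sG /Gb.
  by move/subvP; apply.
Qed.


Definition linon S (g : vec -> vec) :=
  forall (a : R) x y, S x -> S y -> g (a *: x + y) = a *: g x + g y.
Definition addon S (g : vec -> vec) :=
  forall x y, S x -> S y -> g (x + y) = g x + g y.

Lemma linon0 {S g} : is_subspace S -> linon S g -> g 0 = 0.
Proof.
move=> hS hg; have := hg 1 0 0 (sub0 hS) (sub0 hS).
rewrite !scale1r addr0.
by move/(congr1 (fun z => z - g 0)); rewrite subrr addrK => <-.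
Qed.

Lemma linonZ {S g} {a : R} {x} : is_subspace S -> linon S g -> S x -> g (a *: x) = a *: g x.
Proof.
by move=> hS hg hx; have := hg a x 0 hx (sub0 hS); rewrite addr0 (linon0 hS hg) addr0.
Qed.

Lemma linonD {S g x y} : is_subspace S -> linon S g -> S x -> S y -> g (x + y) = g x + g y.
Proof. by move=> hS hg hx hy; have := hg 1 x y hx hy; rewrite !scale1r. Qed.

Lemma linonB {S g x y} : is_subspace S -> linon S g -> S x -> S y -> g (x - y) = g x - g y.
Proof.
by move=> hS hg hx hy; have := hg (-1) y x hy hx; rewrite !scaleN1r addrC [- _ + _]addrC.
Qed.

Lemma linon_sum S g (I : Type) (r : seq I) (F : I -> vec) :
  is_subspace S -> linon S g -> (forall i, S (F i)) ->
  g (\sum_(i <- r) F i) = \sum_(i <- r) g (F i) /\ S (\sum_(i <- r) F i).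
Proof.
move=> hS hg hF; elim: r => [|i r [ih1 ih2]].
  by rewrite !big_nil (linon0 hS hg); split => //; exact: sub0.
by rewrite !big_cons (linonD hS hg) // ih1; split => //; apply: subD.
Qed.

Lemma addon0 {G g} : is_add_subgroup G -> addon G g -> g 0 = 0.
Proof.
move=> hG hg; have := hg 0 0 (grp0 hG) (grp0 hG).
rewrite addr0.
by move/(congr1 (fun z => z - g 0)); rewrite subrr addrK => <-.
Qed.

Lemma addonB {G g x y} : is_add_subgroup G -> addon G g -> G x -> G y -> g (x - y) = g x - g y.
Proof.
move=> hG hg hx hy; have := hg (x - y) y (grpB hG hx hy) hy.
by rewrite subrK => ->; rewrite addrK.
Qed.

Lemma addonN {G g x} : is_add_subgroup G -> addon G g -> G x -> g (- x) = - g x.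
Proof.
move=> hG hg hx; have := addonB hG hg (grp0 hG) hx.
by rewrite !sub0r (addon0 hG hg) sub0r.
Qed.

Lemma addonMz {G g x} {m : int} : is_add_subgroup G -> addon G g -> G x -> g (x *~ m) = g x *~ m.
Proof.
move=> hG hg hx.
have hn k : g (x *+ k) = g x *+ k.
  elim: k => [|k ih]; first by rewrite !mulr0n (addon0 hG hg).
  by rewrite !mulrS hg ?ih //; apply: grpMn.
case: m => k; first by rewrite -!pmulrn.
by rewrite NegzE !mulrNz (addonN hG hg) -?pmulrn ?hn //; apply: grpMn.
Qed.

Lemma addon_sum G g (I : Type) (r : seq I) (F : I -> vec) :
  is_add_subgroup G -> addon G g -> (forall i, G (F i)) ->
  g (\sum_(i <- r) F i) = \sum_(i <- r) g (F i) /\ G (\sum_(i <- r) F i).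
Proof.
move=> hG hg hF; elim: r => [|i r [ih1 ih2]].
  by rewrite !big_nil (addon0 hG hg); split => //; exact: grp0.
by rewrite !big_cons hg // ih1; split => //; apply: grpD.
Qed.

Lemma nth_in {S s j} : S 0 -> (forall x, x \in s -> S x) -> S s`_j.
Proof.
move=> h0 hs; case: (ltnP j (size s)) => hj; first by apply: hs; exact: mem_nth.
by rewrite nth_default.
Qed.

Lemma freeN s : reflect (forall k : nat -> R,
   \sum_(0 <= i < size s) k i *: s`_i = 0 -> forall i, (i < size s)%N -> k i = 0)
   (free s).
Proof.
apply: (iffP idP).
  move=> /(freeP (X := in_tuple s)) h k hk i hi.
  by have := h (fun j => k j) _ (Ordinal hi); apply; rewrite -[RHS]hk big_mkord.
move=> h; apply/(freeP (X := in_tuple s)) => k hk i.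
pose k' (j : nat) := if insub j is Some o then k o else 0.
have := h k' _ i (ltn_ord i); rewrite /k' valK; apply.
rewrite big_mkord -[RHS]hk; apply: eq_bigr => j _; by rewrite valK.
Qed.

Definition Zfree s := forall m : nat -> int,
  \sum_(0 <= i < size s) s`_i *~ m i = 0 -> forall i, (i < size s)%N -> m i = 0.

Lemma free_Zfree {s} : free s -> Zfree s.
Proof.
move=> /freeN h m hm i hi; apply/eqP; rewrite -(intr_eq0 R); apply/eqP.
apply: (h (fun j => (m j)%:~R)) => //; rewrite -[RHS]hm.
by apply: eq_bigr => j _; rewrite scaler_int.
Qed.

Lemma entryB (x y : vec) a : (x - y) 0 a = x 0 a - y 0 a.
Proof. by rewrite !mxE. Qed.

Lemma entry_le (x : vec) a : `|x 0 a| <= `|x|.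
Proof.
have -> : `|x| = mx_norm x by [].
rewrite mx_normrE; exact: (le_bigmax _ (fun ij : 'I_1 * 'I_n => `|x ij.1 ij.2|) (0, a)).
Qed.

Lemma mxnorm_lt (x : vec) e : 0 < e -> (forall a, `|x 0 a| < e) -> `|x| < e.
Proof.
move=> e0 h; have -> : `|x| = mx_norm x by [].
rewrite mx_normrE; apply: bigmax_lt => // -[i a] _ /=.
by rewrite (ord1 i); apply: h.
Qed.


Lemma discrete_free D (eps : R) s : is_add_subgroup D -> 0 < eps ->
  (forall y, D y -> `|y| < eps -> y = 0) ->
  (forall x, x \in s -> D x) -> Zfree s -> free s.
Proof.
move=> hD e0 hd hs hz; apply/freeN => k hk i hi.
apply/eqP; apply: contraT => ki0.
set M := \sum_(0 <= j < size s) `|s`_j|.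
have M0 : 0 <= M by apply: sumr_ge0 => j _.
pose m (t : R) (j : nat) : int := Num.floor (t * k j).
pose P (t : R) := \sum_(0 <= j < size s) s`_j *~ m t j.
have sD j : D s`_j := nth_in (grp0 hD) hs.
have hPD t : D (P t).
  by apply: (big_ind D); [exact: grp0|move=> x y; apply: grpD|move=> j _; apply: grpMz].
have hPM t : `|P t| <= M.
  have -> : P t = \sum_(0 <= j < size s) ((m t j)%:~R - t * k j) *: s`_j.
    rewrite (eq_bigr (fun j => (m t j)%:~R *: s`_j - t *: (k j *: s`_j))); last first.
      by move=> j _; rewrite scalerBl scalerA.
    rewrite sumrB -scaler_sumr hk scaler0 subr0; apply: eq_bigr => j _.
    by rewrite scaler_int.
  apply: le_trans (ler_norm_sum _ _ _) _; apply: ler_sum => j _.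
  rewrite normrZ; apply: ler_piMl => //.
  have := floor_itv (t * k j); rewrite -/(m t j) => /andP[h1 h2].
  rewrite intrD in h2; rewrite ler0_norm ?subr_le0 // opprB; lra.
have hPe t a : `|P t 0 a| <= M := le_trans (entry_le _ _) (hPM t).
have hml (l : nat) : m (l%:R / k i) i = l%:Z.
  by rewrite /m divfK // (intrKfloor (l%:Z)).
set B := Num.trunc (2 * M / eps).
pose key (x : vec) : {ffun 'I_n -> 'I_B.+1} :=
  [ffun a => inord (Num.trunc ((x 0 a + M) / eps))].
set N := #|{ffun 'I_n -> 'I_B.+1}|.
pose g (l : 'I_N.+1) := key (P (l%:R / k i)).
have hx0 (x : vec) a : `|x 0 a| <= M -> 0 <= (x 0 a + M) / eps.
  by move=> hxa; apply: divr_ge0; [rewrite -lerBlDr sub0r; move: hxa; rewrite ler_norml => /andP[]|exact: ltW].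
have hB (x : vec) a : `|x 0 a| <= M -> (Num.trunc ((x 0 a + M) / eps)%R < B.+1)%N.
  move=> hxa; rewrite ltnS /B; apply: le_truncn; rewrite ler_pM2r ?invr_gt0 //.
  by rewrite mulr2n mulrDl mul1r lerD2r; move: hxa; rewrite ler_norml => /andP[].
have ginj : injective g.
  move=> l1 l2 /ffunP heq.
  set P1 := P (l1%:R / k i); set P2 := P (l2%:R / k i).
  have hclose : `|P1 - P2| < eps.
    apply: mxnorm_lt => // a; have := heq a; rewrite !ffunE.
    move/(congr1 val) => /=; rewrite !inordK ?hB ?hPe // => ht.
    have := truncn_itv (hx0 _ a (hPe (l1%:R / k i) a)).
    have := truncn_itv (hx0 _ a (hPe (l2%:R / k i) a)).
    rewrite -/P1 -/P2 ht => /andP[a1 a2] /andP[b1 b2].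
    have h1 : `|(P1 0 a + M) / eps - (P2 0 a + M) / eps| < 1.
      rewrite mulrSr in a2 b2; rewrite ltr_norml; apply/andP; split; lra.
    rewrite entryB [X in X < _](_ : _ = `|(P1 0 a + M) / eps - (P2 0 a + M) / eps| * eps).
      by rewrite -ltr_pdivlMr // divff ?gt_eqF.
    by rewrite -mulrBl -[X in _ = _ * X]gtr0_norm // -normrM divfK ?gt_eqF // opprD addrACA subrr addr0.
  have e12 : P1 = P2.
    by apply/eqP; rewrite -subr_eq0; apply/eqP; apply: hd => //; exact: (grpB hD (hPD _) (hPD _)).
  have : \sum_(0 <= j < size s) s`_j *~ (m (l1%:R / k i) j - m (l2%:R / k i) j) = 0.
    rewrite (eq_bigr (fun j => s`_j *~ m (l1%:R / k i) j - s`_j *~ m (l2%:R / k i) j)).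
      by rewrite sumrB; apply/eqP; rewrite subr_eq0; apply/eqP; exact: e12.
    by move=> j _; rewrite mulrzBr.
  move/hz => /(_ i hi); rewrite !hml => /eqP; rewrite subr_eq0 => /eqP [] e.
  by apply: val_inj.
by have := leq_card g ginj; rewrite card_ord /N ltnn.
Qed.

Lemma vect_sub {G x y} : vect G x -> vect G y -> vect G (x - y).
Proof.
move=> [s [sG xs]] [t [tG yt]]; exists (s ++ t); split.
  by move=> z; rewrite mem_cat => /orP[/sG|/tG].
rewrite span_cat; apply: memvB.
  by apply: (subvP (addvSl _ _)).
by apply: (subvP (addvSr _ _)).
Qed.

Lemma decomp_unique {E D x y x' y'} : is_subspace E -> E `&` vect D = [set 0] ->
  E x -> E x' -> vect D y -> vect D y' -> x + y = x' + y' -> x = x' /\ y = y'.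
Proof.
move=> hE hED Ex Ex' Dy Dy' e.
have h : (E `&` vect D) (x - x').
  split; first exact: subB.
  have -> : x - x' = y' - y.
    by apply/eqP; rewrite subr_eq -addrA (addrC (-y)) addrA (addrC y') -e addrK.
  exact: vect_sub.
rewrite hED /= in h; have xx : x = x' by apply/eqP; rewrite -subr_eq0 h.
by split => //; move: e; rewrite xx => /addrI.
Qed.

Lemma discr_rad {D} : is_discrete_subgroup D ->
  exists2 eps : R, 0 < eps & forall y, D y -> `|y| < eps -> y = 0.
Proof.
move=> [[h0 _] hd]; have := hd 0 h0; move/nbhs_ballP => [e e0 he].
exists e => // y Dy ye; apply: (he y) => //.
by rewrite -ball_normE /ball_ /= sub0r normrN.
Qed.

Lemma line_in {E D V} : is_decomp (sumset E D) E D -> is_subspace V ->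
  V `<=` sumset E D -> V `<=` E.
Proof.
move=> [hE [hD [hED _]]] hV VH v Vv.
have [eps e0 hd] := discr_rad hD.
have [x [y [Ex [Dy ev]]]] := VH v Vv.
suff y0 : y = 0 by rewrite ev y0 addr0.
set t := eps / (`|y| + 1).
have t0 : 0 < t by rewrite divr_gt0 // ltr_pwDr.
have [xt [yt [Ext [Dyt et]]]] := VH _ (subZ (a := t) hV Vv).
have [_ ey] : t *: x = xt /\ t *: y = yt.
  apply: (decomp_unique hE hED (subZ hE Ex) Ext _ (vect_in Dyt)).
    by move: (vect_in Dy) => [s [sD ys]]; exists s; split => //; apply: memvZ.
  by rewrite -scalerDr -ev.
have : t *: y = 0.
  apply: hd; first by rewrite ey.
  rewrite normrZ gtr0_norm // /t mulrAC ltr_pdivrMr ?ltr_pwDr //.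
  by rewrite ltr_pM2l // ltrDl.
by move/eqP; rewrite scaler_eq0 gt_eqF //= => /eqP.
Qed.

Lemma sumset_E {E D x} : is_add_subgroup D -> E x -> sumset E D x.
Proof. by move=> hD Ex; exists x, 0; split => //; split; [exact: grp0|rewrite addr0]. Qed.

Lemma sumset_D {E D y} : is_subspace E -> D y -> sumset E D y.
Proof. by move=> hE Dy; exists 0, y; split; [exact: sub0|split => //; rewrite add0r]. Qed.

Lemma pdim_eq {H E D} : is_decomp H E D -> pdim H = dimS E.
Proof.
move=> hd; have hd' := hd; move: hd' => [hE [[hD _] [hED hH]]].
apply/eqP; rewrite eqn_leq; apply/andP; split.
  apply/bigmax_leqP => k /asboolP [V [hV [VH <-]]]; apply: dimS_mono.
  have hd2 : is_decomp (sumset E D) E D by rewrite -hH.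
  have VH2 : V `<=` sumset E D by rewrite -hH.
  exact: line_in hd2 hV VH2.
have hk : (dimS E < n.+1)%N by rewrite ltnS dimS_len.
apply: (@leq_bigmax_cond _ _ (fun k : 'I_n.+1 => nat_of_ord k) (Ordinal hk)).
apply/asboolP; exists E; split => //; split => //.
by rewrite hH => x; apply: sumset_E.
Qed.

Lemma dimS_sum {H E D} : is_decomp H E D -> dimS H = (dimS E + dimS D)%N.
Proof.
move=> [hE [[hD hdisc] [hED hH]]].
have [bE hbE] := maxfree_ex E; have [bD hbD] := maxfree_ex D.
rewrite (dimS_maxfree hbE) (dimS_maxfree hbD) -size_cat; apply: dimS_maxfree.
case: hbE => bEE fE EbE; case: hbD => bDD fD DbD; split.
- move=> x; rewrite mem_cat hH => /orP[/bEE|/bDD]; [exact: sumset_E|exact: sumset_D].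
- rewrite cat_free fE fD /=; apply/directv_addP; apply/eqP; rewrite -subv0.
  apply/subvP => v; rewrite memv_cap memv0 => /andP[vE vD].
  have : (E `&` vect D) v by split; [exact: (span_in hE bEE)|exists bD].
  by rewrite hED => ->.
- move=> z; rewrite hH => -[x [y [Ex [Dy ->]]]]; rewrite span_cat.
  by apply: memv_add; [exact: EbE|exact: DbD].
Qed.

Lemma preim_seq {S} {g : vec -> vec} {b} :
  (forall y, y \in b -> exists2 x, S x & g x = y) ->
  exists a, (forall x, x \in a -> S x) /\ map g a = b.
Proof.
elim: b => [|y b ih] h; first by exists [::].
have [x Sx gx] := h y (mem_head _ _).
have [a [aS ga]] := ih (fun z (zb : z \in b) => h z ltac:(by rewrite inE zb orbT)).
exists (x :: a); split; last by rewrite /= gx ga.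
by move=> z; rewrite inE => /predU1P[->|/aS].
Qed.

Lemma map_sumZ {S g b} (k : nat -> R) : is_subspace S -> linon S g ->
  (forall x, x \in b -> S x) ->
  g (\sum_(0 <= j < size b) k j *: b`_j) = \sum_(0 <= j < size b) k j *: (map g b)`_j
  /\ S (\sum_(0 <= j < size b) k j *: b`_j).
Proof.
move=> hS hg hb; have hbS j : S b`_j := nth_in (sub0 hS) hb.
have [e1 e2] := linon_sum _ _ _ (index_iota 0 (size b)) (fun j => k j *: b`_j) hS hg (fun j => subZ hS (hbS j)).
split => //; rewrite e1; apply: eq_big_nat => j /andP[_ hj].
by rewrite (linonZ hS hg (hbS j)) (nth_map 0).
Qed.

Lemma map_sumMz {G g b} (m : nat -> int) : is_add_subgroup G -> addon G g ->
  (forall x, x \in b -> G x) ->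
  g (\sum_(0 <= j < size b) b`_j *~ m j) = \sum_(0 <= j < size b) (map g b)`_j *~ m j
  /\ G (\sum_(0 <= j < size b) b`_j *~ m j).
Proof.
move=> hG hg hb; have hbG j : G b`_j := nth_in (grp0 hG) hb.
have [e1 e2] := addon_sum _ _ _ (index_iota 0 (size b)) (fun j => b`_j *~ m j) hG hg (fun j => grpMz hG (hbG j)).
split => //; rewrite e1; apply: eq_big_nat => j /andP[_ hj].
by rewrite (addonMz hG hg (hbG j)) (nth_map 0).
Qed.

Lemma dim_inj_lin {S T g} : is_subspace S -> (forall x, S x -> T (g x)) -> linon S g ->
  (forall x y, S x -> S y -> g x = g y -> x = y) -> (dimS S <= dimS T)%N.
Proof.
move=> hS gT hg ginj.
have [b hb] := maxfree_ex S; rewrite (dimS_maxfree hb); case: hb => bS fb _.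
rewrite -(size_map g); apply: dimS_ge; last by move=> y /mapP[x xb ->]; apply: gT; apply: bS.
apply/freeN => k; rewrite size_map => hk i hi.
have [e1 e2] := map_sumZ k hS hg bS.
move/freeN: fb; apply => //; apply: ginj => //; first exact: sub0.
by rewrite e1 hk (linon0 hS hg).
Qed.

Lemma dim_surj_lin {S T g} : is_subspace S -> linon S g ->
  (forall y, T y -> exists2 x, S x & g x = y) -> (dimS T <= dimS S)%N.
Proof.
move=> hS hg gs.
have [b hb] := maxfree_ex T; rewrite (dimS_maxfree hb); case: hb => bT fb _.
have [a [aS ga]] := preim_seq (fun y yb => gs y (bT y yb)).
rewrite -ga size_map; apply: (dimS_ge _ aS); apply/freeN => k hk i hi.
have [e1 e2] := map_sumZ k hS hg aS.
move/freeN: fb; apply; last by rewrite -ga size_map.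
by rewrite -ga size_map -e1 hk (linon0 hS hg).
Qed.

Lemma dim_inj_grp {D D' g} : is_add_subgroup D -> is_discrete_subgroup D' ->
  (forall x, D x -> D' (g x)) -> addon D g ->
  (forall x y, D x -> D y -> g x = g y -> x = y) -> (dimS D <= dimS D')%N.
Proof.
move=> hD hD' gD hg ginj.
have [eps e0 hd] := discr_rad hD'.
have [b hb] := maxfree_ex D; rewrite (dimS_maxfree hb); case: hb => bD fb _.
have mD : forall y, y \in map g b -> D' y by move=> y /mapP[x xb ->]; apply: gD; apply: bD.
rewrite -(size_map g); apply: (dimS_ge _ mD).
apply: (@discrete_free D' eps (map g b) hD'.1 e0 hd mD) => m; rewrite size_map => hm i hi.
have [e1 e2] := map_sumMz m hD hg bD.
apply: (free_Zfree fb) => //; apply: ginj => //; first exact: grp0.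
by rewrite e1 hm (addon0 hD hg).
Qed.

Lemma dim_surj_grp {D D' g} : is_discrete_subgroup D -> is_add_subgroup D' -> addon D g ->
  (forall y, D' y -> exists2 x, D x & g x = y) -> (dimS D' <= dimS D)%N.
Proof.
move=> hD hD' hg gs.
have [eps e0 hd] := discr_rad hD.
have [b hb] := maxfree_ex D'; rewrite (dimS_maxfree hb); case: hb => bD fb _.
have [a [aD ga]] := preim_seq (fun y yb => gs y (bD y yb)).
rewrite -ga size_map; apply: (dimS_ge _ aD).
apply: (@discrete_free D eps a hD.1 e0 hd aD) => m hm i hi.
have [e1 e2] := map_sumMz m hD.1 hg aD.
apply: (free_Zfree fb); last by rewrite -ga size_map.
by rewrite -ga size_map -e1 hm (addon0 hD.1 hg).
Qed.

Lemma subspaceT : is_subspace (@setT vec).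
Proof. by []. Qed.

Lemma lin_bound (h : vec -> vec) : (forall (a : R) u v, h (a *: u + v) = a *: h u + h v) ->
  exists2 C : R, 0 <= C & forall u, `|h u| <= C * `|u|.
Proof.
move=> hl; have hg : linon setT h by move=> a x y _ _; apply: hl.
exists (\sum_(j < n) `|h 'e_j|); first by apply: sumr_ge0.
move=> u; rewrite {1}(row_sum_delta u).
have [-> _] := linon_sum _ _ _ (index_enum 'I_n) (fun j => u 0 j *: 'e_j) subspaceT hg (fun _ => I).
apply: le_trans (ler_norm_sum _ _ _) _; rewrite mulr_suml; apply: ler_sum => j _.
rewrite (linonZ subspaceT hg) // normrZ mulrC ler_wpM2l //; exact: entry_le.
Qed.

Lemma closure_ball {A : set vec} {z} : closure A z ->
  forall e : R, 0 < e -> exists2 v, A v & `|z - v| < e.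
Proof.
move=> cz e e0; have [v [Av bv]] := cz _ (nbhsx_ballx z e e0); exists v => //.
by move: bv; rewrite -ball_normE.
Qed.

Lemma ball_closure {A : set vec} {z} :
  (forall e : R, 0 < e -> exists2 v, A v & `|z - v| < e) -> closure A z.
Proof.
move=> h B /nbhs_ballP [e e0 he]; have [v Av ve] := h e e0; exists v; split => //.
by apply: he; rewrite -ball_normE.
Qed.

Lemma small_eta {C eps : R} : 0 <= C -> 0 < eps -> exists2 eta : R, 0 < eta & C * eta < eps.
Proof.
move=> C0 e0; exists (eps / (C + 1)); first by rewrite divr_gt0 // ltr_pwDr.
rewrite mulrA ltr_pdivrMr ?ltr_pwDr // mulrC ltr_pM2l //; lra.
Qed.

Lemma vspace_closed (U : {vspace vec}) : closed [set v | v \in U].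
Proof.
move=> z cz /=; set p := projv U.
have [C C0 hC] := lin_bound (p : vec -> vec) (fun a u v => linearP p a u v).
suff -> : z = p z by apply: memv_proj.
apply/eqP; rewrite -subr_eq0 -normr_eq0 eq_le normr_ge0 andbT.
apply/ler_addgt0Pr => e e0; rewrite add0r.
have [eta eta0 hC'] := small_eta (addr_ge0 C0 ler01) e0.
have [v Uv zv] := closure_ball cz eta eta0.
have -> : z - p z = (z - v) - p (z - v).
  by rewrite linearB /= (projv_id Uv) opprB addrA subrK.
apply: le_trans (ler_normB _ _) _; apply: le_trans (ltW hC').
rewrite mulrDl mul1r addrC; apply: lerD; last exact: ltW.
by apply: le_trans (hC _) _; rewrite ler_wpM2l // ltW.
Qed.

Lemma cap_span0 {E D} {U : {vspace vec}} {bD} : E `&` vect D = [set 0] ->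
  (forall x, x \in U -> E x) -> (forall x, x \in bD -> D x) ->
  (U :&: <<bD>> = 0)%VS.
Proof.
move=> hED UE bDD; apply/eqP; rewrite -subv0.
apply/subvP => v; rewrite memv_cap memv0 => /andP[vE vD].
have : (E `&` vect D) v by split; [exact: UE|exists bD].
by rewrite hED => ->.
Qed.

Lemma pi_zero {U V : {vspace vec}} {v} : (U :&: V = 0)%VS -> v \in V -> daddv_pi U V v = 0.
Proof.
move=> cap vV.
have := daddv_pi_add cap ((subvP (addvSr U V)) v vV).
rewrite (daddv_pi_id _ vV); last by rewrite capvC.
by move/(congr1 (fun w => w - v)); rewrite addrK subrr.
Qed.

Lemma ext_lin {E} {f1 : vec -> vec} : is_subspace E -> linon E f1 ->
  exists (g : 'End(vec)) (U : {vspace vec}),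
    (forall x, E x -> f1 x = g x /\ x \in U) /\ (forall x, x \in U -> E x).
Proof.
move=> hE hf; have [bE [bEE fE EbE]] := maxfree_ex E.
have [l hl] := linear_of_free bE (map f1 bE).
have ml := hl fE (size_map _ _).
exists (linfun l), <<bE>>%VS; split; last by move=> x; apply: span_in.
move=> x Ex; split; last exact: EbE.
have xb := EbE x Ex.
rewrite (@coord_span _ _ _ (in_tuple bE) x xb) lfunE /= linear_sum /=.
have hbE j : E bE`_j := nth_in (sub0 hE) bEE.
have [-> _] := linon_sum _ _ _ (index_enum 'I_(size bE))
   (fun i : 'I_(size bE) => coord (in_tuple bE) i x *: bE`_i) hE hf (fun i => subZ hE (hbE i)).
apply: eq_bigr => i _; rewrite (linonZ hE hf (hbE i)) linearZ /=; congr (_ *: _).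
by rewrite -(nth_map 0 0 f1 (ltn_ord i)) -ml (nth_map 0).
Qed.

End P1.

Lemma normc_mono (R : realType) (a b a' b' : nat) : (a <= a')%N -> (b <= b')%N ->
  `|(a%:R +i* b%:R)%C| <= `|(a'%:R +i* b'%:R)%C| :> R[i].
Proof.
move=> ha hb; rewrite !normc_def /= lecR ler_sqrt ?addr_ge0 ?sqr_ge0 //.
by rewrite -!natrX -!natrD ler_nat leq_add // leq_sqr.
Qed.

Lemma dimt_eq {R : realType} {n : nat} {H E D : set 'rV[R]_n} :
  is_decomp H E D -> dimt H = ((dimS E)%:R +i* (dimS D)%:R)%C.
Proof.
move=> hd; rewrite /dimt (pdim_eq hd) qdim_eq (dimS_sum hd) natrD.
by rewrite addrAC subrr add0r.
Qed.

Theorem theorem1p8 (R : realType) (n : nat)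
    (H E D K E' D' : set 'rV[R]_n) (f f1 f2 : 'rV[R]_n -> 'rV[R]_n) :
  is_closed_subgroup H -> is_decomp H E D ->
  is_closed_subgroup K -> is_decomp K E' D' ->
  is_cag_hom E D E' D' f f1 f2 ->
  (* f maps H into K *)
  f @` H `<=` K ->
  [/\ (* (i) *)
      ((forall x y, H x -> H y -> f x = f y -> x = y) ->
         `|dimt H| <= `|dimt K|),
      (* (ii) *)
      (f @` H = K -> `|dimt K| <= `|dimt H|),
      (* (iii) *)
      ((forall x y, H x -> H y -> f x = f y -> x = y) -> f @` H = K ->
         dimt H = dimt K),
      (* (iv) *)
      (is_closed_subgroup (f @` H) /\ f @` H `<=` K) &
      (* (v) *)
      (forall L : set 'rV[R]_n, is_closed_subgroup L -> L `<=` K ->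
         is_closed_subgroup (H `&` f @^-1` L) /\ H `&` f @^-1` L `<=` H)].
Proof.
move=> hHc hdH hKc hdK [f1E [f1l [f2D [f2a fdef]]]] fHK.
have [hE [hDd [hED hH]]] := hdH.
have [hE' [hDd' [hED' hK]]] := hdK.
have hD := hDd.1; have hD' := hDd'.1.
have f1lin : linon E f1 := f1l.
have f2add : addon D f2 := f2a.
have fsum x y : E x -> D y -> f (x + y) = f1 x + f2 y.
  by move=> Ex Dy; have := fdef 1 1 x y Ex Dy; rewrite !scale1r !mulr1z.
have fE x : E x -> f x = f1 x.
  by move=> Ex; have := fsum x 0 Ex (grp0 hD); rewrite addr0 (addon0 hD f2add) addr0.
have fD y : D y -> f y = f2 y.
  by move=> Dy; have := fsum 0 y (sub0 hE) Dy; rewrite add0r (linon0 hE f1lin) add0r.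
have Hsplit h : H h -> exists x y, [/\ E x, D y & h = x + y].
  by rewrite hH => -[x [y [Ex [Dy ->]]]]; exists x, y.
have inHE x : E x -> H x by move=> Ex; rewrite hH; exact: sumset_E.
have inHD y : D y -> H y by move=> Dy; rewrite hH; exact: sumset_D.
have inKE x : E' x -> K x by move=> Ex; rewrite hK; exact: sumset_E.
have inKD y : D' y -> K y by move=> Dy; rewrite hK; exact: sumset_D.
have f0 : f 0 = 0 by rewrite (fE _ (sub0 hE)) (linon0 hE f1lin).
have fB h h' : H h -> H h' -> f (h - h') = f h - f h'.
  move=> /Hsplit [x [y [Ex Dy ->]]] /Hsplit [x' [y' [Ex' Dy' ->]]].
  rewrite opprD addrACA (fsum _ _ (subB hE Ex Ex') (grpB hD Dy Dy')) !fsum //.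
  by rewrite (linonB hE f1lin) // (addonB hD f2add) // opprD addrACA.
have dinj : (forall x y, H x -> H y -> f x = f y -> x = y) ->
    (dimS E <= dimS E')%N /\ (dimS D <= dimS D')%N.
  move=> hinj; split.
    apply: (dim_inj_lin hE f1E f1lin) => x y Ex Ey e.
    by apply: hinj; [exact: inHE|exact: inHE|rewrite !fE].
  apply: (dim_inj_grp hD hDd' f2D f2add) => x y Dx Dy e.
  by apply: hinj; [exact: inHD|exact: inHD|rewrite !fD].
have dsurj : f @` H = K -> (dimS E' <= dimS E)%N /\ (dimS D' <= dimS D)%N.
  move=> hsur; split.
    apply: (dim_surj_lin hE f1lin) => y Ey.
    have : K y by exact: inKE.
    rewrite -hsur => -[h /Hsplit [x [z [Ex Dz ->]]]]; rewrite fsum // => e.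
    exists x => //.
    have [] := decomp_unique hE' hED' (f1E x Ex) Ey (vect_in (f2D z Dz)) (vect_in (grp0 hD')) _.
      by rewrite addr0.
    by [].
  apply: (dim_surj_grp hDd hD' f2add) => y Dy.
  have : K y by exact: inKD.
  rewrite -hsur => -[h /Hsplit [x [z [Ex Dz ->]]]]; rewrite fsum // => e.
  exists z => //.
  have [] := decomp_unique hE' hED' (f1E x Ex) (sub0 hE') (vect_in (f2D z Dz)) (vect_in Dy) _.
    by rewrite add0r.
  by [].
split.
- move=> hinj; have [h1 h2] := dinj hinj.
  by rewrite (dimt_eq hdH) (dimt_eq hdK); apply: normc_mono.
- move=> hsur; have [h1 h2] := dsurj hsur.
  by rewrite (dimt_eq hdH) (dimt_eq hdK); apply: normc_mono.
- move=> hinj hsur; have [h1 h2] := dinj hinj; have [h3 h4] := dsurj hsur.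
  rewrite (dimt_eq hdH) (dimt_eq hdK).
  by rewrite (@anti_leq (dimS E) (dimS E')) ?h1 ?h3 // (@anti_leq (dimS D) (dimS D')) ?h2 ?h4.
- split => //; split; first split.
  + by exists 0; [exact: hHc.1.1|exact: f0].
  + move=> _ _ [h Hh <-] [h' Hh' <-]; exists (h - h'); last exact: fB.
    exact: grpB hHc.1 Hh Hh'.
  move=> z cz.
  have [bE' [bE'E fbE' E'bE']] := maxfree_ex E'.
  have [bD' [bD'D fbD' D'bD']] := maxfree_ex D'.
  have cap1 : (<<bD'>> :&: <<bE'>> = 0)%VS.
    by rewrite capvC; apply: (cap_span0 hED') => // x; apply: (span_in hE' bE'E).
  set Q := daddv_pi <<bD'>>%VS <<bE'>>%VS.
  have QE v : E' v -> Q v = 0 by move=> Ev; apply: (pi_zero cap1 (E'bE' v Ev)).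
  have QD v : D' v -> Q v = v by move=> Dv; apply: (daddv_pi_id cap1 (D'bD' v Dv)).
  have Qf x y : E x -> D y -> Q (f1 x + f2 y) = f2 y.
    by move=> Ex Dy; rewrite linearD /= (QE _ (f1E x Ex)) (QD _ (f2D y Dy)) add0r.
  have [eps e0 hd] := discr_rad hDd'.
  have [CQ CQ0 hCQ] := lin_bound (Q : 'rV[R]_n -> 'rV[R]_n) (fun a u v => linearP Q a u v).
  have [eta eta0 heta] := small_eta (addr_ge0 CQ0 CQ0) e0.
  have [u0 [h0 Hh0 hu0] zu0] := closure_ball cz eta eta0.
  have [x0 [y0 [Ex0 Dy0 eh0]]] := Hsplit h0 Hh0.
  set dl := f2 y0.
  have key h : H h -> `|z - f h| < eta -> exists2 x, E x & f h = f1 x + dl.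
    move=> /Hsplit [x [y [Ex Dy ->]]] zh; exists x => //.
    rewrite fsum //; congr (_ + _).
    apply/eqP; rewrite -subr_eq0; apply/eqP; apply: hd.
      exact: (grpB hD' (f2D y Dy) (f2D y0 Dy0)).
    rewrite /dl -(Qf x y Ex Dy) -(Qf x0 y0 Ex0 Dy0) -linearB /=.
    have hu : `|(f1 x + f2 y) - (f1 x0 + f2 y0)| <= eta + eta.
      rewrite -(fsum x y Ex Dy) -(fsum x0 y0 Ex0 Dy0) -eh0 hu0.
      have -> : f (x + y) - u0 = (f (x + y) - z) + (z - u0) by rewrite addrA subrK.
      apply: le_trans (ler_normD _ _) _; rewrite distrC; apply: lerD; exact: ltW.
    apply: le_lt_trans (hCQ _) _; apply: le_lt_trans heta.
    by rewrite mulrDl -mulrDr ler_wpM2l.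
  have [g [U [gE UE]]] := ext_lin hE f1lin.
  set V := (g @: U)%VS.
  have zV : (z - dl) \in V.
    apply: (vspace_closed V); apply: ball_closure => e e0'.
    have [u [h Hh hu] zu] := closure_ball cz (Num.min e eta) ltac:(by rewrite lt_min e0' eta0).
    move: zu; rewrite lt_min => /andP[zue zueta].
    have [x Ex ex] := key h Hh ltac:(by rewrite hu).
    exists (f1 x).
      by rewrite /= (gE x Ex).1; apply: memv_img; exact: (gE x Ex).2.
    have -> : z - dl - f1 x = z - (f1 x + dl) by rewrite opprD addrA addrAC.
    by rewrite -ex hu.
  have /memv_imgP [x1 Ux1 e1] := zV.
  exists (x1 + y0); first by rewrite hH; exists x1, y0; split; [exact: UE|split].

  by rewrite (fsum _ _ (UE _ Ux1) Dy0) (gE x1 (UE x1 Ux1)).1 -e1 subrK.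
- move=> L hL LK; split; last by move=> x [].
  split; first split.
  + by split; [exact: hHc.1.1|rewrite /= f0; exact: hL.1.1].
  + move=> x y [Hx Lx] [Hy Ly]; split; first exact: (grpB hHc.1 Hx Hy).
    by rewrite /= fB //; exact: (grpB hL.1 Lx Ly).
  + move=> z cz.
    have Hz : H z.
      by apply: hHc.2; apply: (closure_subset _ cz) => x [].
    have [x [y [Ex Dy ez]]] := Hsplit z Hz.
    split => //=.
    have [g [U [gE UE]]] := ext_lin hE f1lin.
    have [bD [bDD fbD DbD]] := maxfree_ex D.
    have cap : (U :&: <<bD>> = 0)%VS := cap_span0 hED UE bDD.
    set P := daddv_pi U <<bD>>%VS.
    have Pxy x' y' : E x' -> D y' -> P (x' + y') = x'.
      move=> Ex' Dy'.
      by rewrite linearD /= (daddv_pi_id cap ((gE x' Ex').2)) (pi_zero cap (DbD y' Dy')) addr0.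
    have [CP CP0 hCP] := lin_bound (P : 'rV[R]_n -> 'rV[R]_n) (fun a u v => linearP P a u v).
    pose psi u := g (P u).
    have psil : forall (a : R) u v, psi (a *: u + v) = a *: psi u + psi v.
      by move=> a u v; rewrite /psi !linearP.
    have [Cg Cg0 hCg] := lin_bound psi psil.
    have [eps e0 hd] := discr_rad hDd.
    apply: hL.2; apply: ball_closure => e e0'.
    have [eta1 eta10 h1] := small_eta (addr_ge0 CP0 ler01) e0.
    have [eta2 eta20 h2] := small_eta Cg0 e0'.
    have [u [Hu Lu] zu] := closure_ball cz (Num.min eta1 eta2) ltac:(by rewrite lt_min eta10 eta20).
    move: zu; rewrite lt_min => /andP[zu1 zu2].
    have [x' [y' [Ex' Dy' eu]]] := Hsplit u Hu.
    have yy : y' = y.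
      apply/eqP; rewrite -subr_eq0; apply/eqP; apply: hd; first exact: (grpB hD Dy' Dy).
      have -> : y' - y = (u - z) - P (u - z).
        rewrite linearB /= eu ez !Pxy //.
        by rewrite opprD addrACA [RHS]addrC addKr.
      apply: le_lt_trans h1; apply: le_trans (ler_normB _ _) _.
      rewrite mulrDl mul1r addrC; apply: lerD; last by rewrite distrC ltW.
      by apply: le_trans (hCP _) _; rewrite ler_wpM2l // distrC ltW.
    exists (f u) => //.
    have -> : f z - f u = psi (z - u).
      rewrite (_ : psi (z - u) = psi z - psi u); last by rewrite /psi !linearB.
      rewrite ez eu yy !fsum // /psi !Pxy // -(gE x Ex).1 -(gE x' Ex').1.
      by rewrite opprD addrACA subrr addr0.
    apply: le_lt_trans (hCg _) _; apply: le_lt_trans h2; rewrite ler_wpM2l //; exact: ltW.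
Qed.
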